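(* Let $n\ge1$ and let $\mathcal{T}:\mathrm{Cvx}(\mathbb{R}^n)\to\mathrm{Cvx}(\mathbb{R}^n)$ satisfy: (1) for all $\phi,\psi\in\mathrm{Cvx}(\mathbb{R}^n)$, $\phi\le\psi$ if and only if $\mathcal{T}\phi\le\mathcal{T}\psi$; (2) if $\phi\in\mathrm{Cvx}(\mathbb{R}^n)$ is positively homogeneous (i.e. $\phi(\lambda x)=\lambda\phi(x)$ for all $x$ and all $\lambda>0$), then $\mathcal{T}\phi=\phi$; (3) the image $\mathrm{Im}\,\mathcal{T}=\{\mathcal{T}\phi:\phi\in\mathrm{Cvx}(\mathbb{R}^n)\}$ is closed under pointwise addition, in the sense that whenever $\phi',\psi'\in\mathrm{Im}\,\mathcal{T}$ and $\phi'+\psi'$ is finite at some point, then $\phi'+\psi'\in\mathrm{Im}\,\mathcal{T}$. Then there is a constant $C>0$ such that $(\mathcal{T}\phi)(x)=\frac{1}{C}\phi(Cx)$ for all $\phi\in\mathrm{Cvx}(\mathbb{R}^n)$ and all $x\in\mathbb{R}^n$.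
   Context: $\mathrm{Cvx}(\mathbb{R}^n)$ denotes the set of functions $\phi:\mathbb{R}^n\to(-\infty,\infty]$ that are convex, lower semicontinuous, and finite at at least one point. For functions, $\phi\le\psi$ means $\phi(x)\le\psi(x)$ for all $x$. *)

(* Defs.v *)
From Stdlib Require Import Reals Lra.
From Stdlib Require Vectors.Fin.
Open Scope R_scope.

Definition vec (n : nat) : Type := Fin.t n -> R.
Definition vscal {n} (c : R) (x : vec n) : vec n := fun i => c * x i.
Definition vadd {n} (x y : vec n) : vec n := fun i => x i + y i.

(* Extended values in (-oo, +oo]: Some r = r, None = +oo. *)
Definition ext := option R.
Definition ele (a b : ext) : Prop :=
  match a, b with
  | _, None => True
  | None, Some _ => False
  | Some a', Some b' => a' <= b'
  end.
Definition eadd (a b : ext) : ext :=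
  match a, b with
  | Some a', Some b' => Some (a' + b')
  | _, _ => None
  end.
(* multiplication by a real c > 0, with c * (+oo) = +oo *)
Definition escal (c : R) (a : ext) : ext :=
  match a with Some a' => Some (c * a') | None => None end.

Definition fle {n} (f g : vec n -> ext) : Prop := forall x, ele (f x) (g x).

Definition rlt (t : R) (a : ext) : Prop :=
  match a with Some a' => t < a' | None => True end.

(* convexity with the usual conventions for +oo (endpoints l = 0, 1 trivial) *)
Definition convex {n} (f : vec n -> ext) : Prop :=
  forall (x y : vec n) (l : R), 0 < l < 1 ->
    ele (f (vadd (vscal l x) (vscal (1 - l) y)))
        (eadd (escal l (f x)) (escal (1 - l) (f y))).

(* lower semicontinuity; sup-norm neighbourhoods generate the usual
   topology of R^n *)
Definition lsc {n} (f : vec n -> ext) : Prop :=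
  forall (x : vec n) (t : R), rlt t (f x) ->
    exists d : R, 0 < d /\
      forall y : vec n, (forall i, Rabs (y i - x i) < d) -> rlt t (f y).

Definition Cvx {n} (f : vec n -> ext) : Prop :=
  convex f /\ lsc f /\ exists x, f x <> None.

Definition pos_hom {n} (f : vec n -> ext) : Prop :=
  forall (x : vec n) (l : R), 0 < l -> f (vscal l x) = escal l (f x).

(* Main.v *)
Require Import Defs.
From Stdlib Require Import Reals.
Open Scope R_scope.
From Stdlib Require Import Lra Psatz Lia ClassicalEpsilon FunctionalExtensionality Classical.

Definition dec (P : Prop) : {P} + {~P} := excluded_middle_informative P.
Definition kc {n} (c : R) : vec n -> ext := fun _ => Some c.
Definition D {n} (q : vec n) (c : R) : vec n -> ext :=
  fun x => if dec (x = q) then Some c else None.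
Definition zv {n} : vec n := fun _ => 0.
Definition inR {n} (q : vec n) k (x : vec n) : Prop :=
  0 <= x k / q k /\ forall i, x i = x k / q k * q i.
Definition H {n} (q : vec n) k lam : vec n -> ext :=
  fun x => if dec (inR q k x) then Some (lam * (x k / q k)) else None.

Lemma vec_ext {n} (x y : vec n) : (forall i, x i = y i) -> x = y.
Proof. intro h; apply functional_extensionality; exact h. Qed.

Lemma vec_neq {n} (x y : vec n) : x <> y -> exists i, x i <> y i.
Proof.
  intro h. apply NNPP. intro h2. apply h. apply vec_ext. intro i.
  apply NNPP. intro h3. apply h2. exists i. exact h3.
Qed.

Lemma ele_None a : ele a None.
Proof. destruct a; simpl; auto. Qed.

Lemma Cvx_kc {n} c : Cvx (@kc n c).
Proof.
  split; [|split].
  - intros x y l hl. unfold kc; simpl. nra.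
  - intros x t ht. exists 1. split; [lra|]. intros y _. exact ht.
  - exists (fun _ => 0). unfold kc. discriminate.
Qed.

Lemma Cvx_D {n} (q : vec n) c : Cvx (D q c).
Proof.
  split; [|split].
  - intros x y l hl. unfold D.
    destruct (dec (x = q)) as [ex|ex]; destruct (dec (y = q)) as [ey|ey];
      simpl; try apply ele_None.
    subst. destruct (dec _) as [e|e]; simpl.
    + nra.
    + exfalso; apply e. apply vec_ext; intro i; unfold vadd, vscal; ring.
  - intros x t ht. unfold D in *. destruct (dec (x = q)) as [ex|ex].
    + exists 1. split; [lra|]. intros y _. destruct (dec (y = q)); simpl; auto.
    + destruct (vec_neq _ _ ex) as [i hi].
      exists (Rabs (x i - q i)). split.
      * apply Rabs_pos_lt. lra.
      * intros y hy. destruct (dec (y = q)) as [e|e]; simpl; auto.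
        subst. specialize (hy i). rewrite Rabs_minus_sym in hy. lra.
  - exists q. unfold D. destruct (dec (q = q)); [discriminate| congruence].
Qed.

Lemma pos_hom_kc0 {n} : pos_hom (@kc n 0).
Proof. intros x l hl. unfold kc; simpl. f_equal; ring. Qed.

Lemma pos_hom_D0 {n} : pos_hom (@D n zv 0).
Proof.
  intros x l hl. unfold D.
  destruct (dec (vscal l x = zv)) as [e|e]; destruct (dec (x = zv)) as [e2|e2];
    simpl; auto.
  - f_equal; ring.
  - exfalso. apply e2. apply vec_ext. intro i.
    assert (h := f_equal (fun f => f i) e). unfold vscal, zv in *; simpl in h.
    apply Rmult_integral in h. destruct h; lra.
  - exfalso. apply e. subst. apply vec_ext. intro i. unfold vscal, zv. ring.
Qed.

Lemma cont_lin (a eps : R) : 0 < eps -> exists d, 0 < d /\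
  forall u v, Rabs (u - v) < d -> Rabs (a * u - a * v) < eps.
Proof.
  intro he. exists (eps / (Rabs a + 1)). split.
  - apply Rdiv_lt_0_compat; [lra|]. pose proof (Rabs_pos a); lra.
  - intros u v h. replace (a * u - a * v) with (a * (u - v)) by ring.
    rewrite Rabs_mult. pose proof (Rabs_pos a). pose proof (Rabs_pos (u - v)).
    apply Rle_lt_trans with (Rabs a * (eps / (Rabs a + 1))).
    + apply Rmult_le_compat_l; lra.
    + unfold Rdiv. rewrite <- Rmult_assoc.
      apply Rmult_lt_reg_r with (Rabs a + 1); [lra|].
      rewrite Rmult_assoc, Rinv_l by lra. nra.
Qed.

Lemma inR_tk {n} (q : vec n) k x t : q k <> 0 -> (forall i, x i = t * q i) -> x k / q k = t.
Proof. intros hq h. rewrite h. field. auto. Qed.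

Lemma Cvx_H {n} (q : vec n) k lam : q k <> 0 -> Cvx (H q k lam).
Proof.
  intro hq. split; [|split].
  - intros x y l hl. unfold H.
    destruct (dec (inR q k x)) as [[hx0 hx]|ex]; destruct (dec (inR q k y)) as [[hy0 hy]|ey];
      simpl; try apply ele_None.
    set (tx := x k / q k) in *. set (ty := y k / q k) in *.
    assert (hz : forall i, vadd (vscal l x) (vscal (1 - l) y) i = (l * tx + (1-l) * ty) * q i).
    { intro i. unfold vadd, vscal. rewrite (hx i), (hy i). ring. }
    rewrite (inR_tk _ _ _ _ hq hz).
    destruct (dec _) as [e|e]; simpl.
    + nra.
    + exfalso. apply e. split.
      * rewrite (inR_tk _ _ _ _ hq hz). nra.
      * intro i. rewrite (inR_tk _ _ _ _ hq hz). apply hz.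
  - intros x t ht. unfold H in *. destruct (dec (inR q k x)) as [hx|ex].
    + simpl in ht.
      destruct (cont_lin (lam / q k) (lam * (x k / q k) - t)) as [d [hd hd2]]; [lra|].
      exists d. split; auto. intros y hy. destruct (dec (inR q k y)); simpl; auto.
      specialize (hd2 (y k) (x k) (hy k)).
      replace (lam / q k * y k) with (lam * (y k / q k)) in hd2 by (field; auto).
      replace (lam / q k * x k) with (lam * (x k / q k)) in hd2 by (field; auto).
      apply Rabs_def2 in hd2. lra.
    + unfold inR in ex. apply not_and_or in ex. destruct ex as [ex|ex].
      * destruct (cont_lin (/ q k) (- (x k / q k))) as [d [hd hd2]]; [lra|].
        exists d. split; auto. intros y hy. destruct (dec (inR q k y)) as [[hy0 _]|]; simpl; auto.
        specialize (hd2 (y k) (x k) (hy k)).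
        replace (/ q k * y k) with (y k / q k) in hd2 by (field; auto).
        replace (/ q k * x k) with (x k / q k) in hd2 by (field; auto).
        apply Rabs_def2 in hd2. lra.
      * apply not_all_ex_not in ex. destruct ex as [i hi].
        set (g := x i - x k / q k * q i).
        assert (hg : 0 < Rabs g) by (apply Rabs_pos_lt; unfold g; lra).
        assert (hgd : g = x i - x k / q k * q i) by reflexivity.
        destruct (cont_lin (q i / q k) (Rabs g / 2)) as [d [hd hd2]]; [lra|].
        exists (Rmin d (Rabs g / 2)). split.
        { apply Rmin_pos; lra. }
        intros y hy. destruct (dec (inR q k y)) as [[_ hy1]|]; simpl; auto.
        specialize (hd2 (y k) (x k) (Rlt_le_trans _ _ _ (hy k) (Rmin_l _ _))).
        pose proof (Rlt_le_trans _ _ _ (hy i) (Rmin_r _ _)) as hyi.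
        specialize (hy1 i).
        replace (q i / q k * y k) with (y k / q k * q i) in hd2 by (field; auto).
        replace (q i / q k * x k) with (x k / q k * q i) in hd2 by (field; auto).
        apply Rabs_def2 in hd2. apply Rabs_def2 in hyi.
        clearbody g. destruct (Rcase_abs g) as [hc|hc].
        -- rewrite Rabs_left in * by lra. lra.
        -- rewrite Rabs_right in * by lra. lra.
  - exists q. unfold H. destruct (dec (inR q k q)) as [|e]; [discriminate|].
    exfalso; apply e. split.
    + unfold Rdiv; rewrite Rinv_r by auto; lra.
    + intro i. unfold Rdiv; rewrite Rinv_r by auto; ring.
Qed.

Lemma pos_hom_H {n} (q : vec n) k lam : q k <> 0 -> pos_hom (H q k lam).
Proof.
  intros hq x l hl. unfold H; cbv beta.
  assert (e1 : vscal l x k / q k = l * (x k / q k)) by (unfold vscal; field; auto).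
  destruct (dec (inR q k (vscal l x))) as [[h0 h1]|e]; destruct (dec (inR q k x)) as [[g0 g1]|e2];
    simpl; auto.
  - f_equal. unfold vscal; field; auto.
  - exfalso; apply e2. unfold inR in *. unfold vscal in *. rewrite e1 in h0, h1. split.
    + nra.
    + intro i. specialize (h1 i).
      apply Rmult_eq_reg_l with l; [|lra]. rewrite h1. ring.
  - exfalso; apply e. unfold inR. unfold vscal in *. rewrite e1. split.
    + nra.
    + intro i. rewrite (g1 i). ring.
Qed.

Lemma vec_bound n (v : vec n) : exists M, 0 < M /\ forall i, Rabs (v i) <= M.
Proof.
  induction n as [|n IH].
  - exists 1. split; [lra|]. intro i. apply (Fin.case0 (fun i => Rabs (v i) <= 1)).
  - destruct (IH (fun i => v (Fin.FS i))) as [M [hM hM2]].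
    exists (M + Rabs (v Fin.F1)). split.
    + pose proof (Rabs_pos (v Fin.F1)); lra.
    + intro i. apply (Fin.caseS' i (fun i => Rabs (v i) <= M + Rabs (v Fin.F1))).
      * lra.
      * intro p. specialize (hM2 p). simpl in hM2. pose proof (Rabs_pos (v Fin.F1)); lra.
Qed.

Lemma bdd_le {n} (f : vec n -> ext) x y vx vy : convex f -> (forall z, ele (f z) (Some 0)) ->
  f x = Some vx -> f y = Some vy -> vy <= vx.
Proof.
  intros hc hb hx hy. destruct (Rle_or_lt vy vx) as [h|h]; auto. exfalso.
  set (d := vy - vx). assert (hd : 0 < d) by (unfold d; lra).
  assert (hvy : vy <= 0) by (specialize (hb y); rewrite hy in hb; exact hb).
  set (t := (1 - vy) / d). assert (ht : 0 < t) by (unfold t; apply Rdiv_lt_0_compat; lra).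
  set (z := vadd (vscal (1 + t) y) (vscal (- t) x)).
  set (L := / (1 + t)).
  assert (hL : 0 < L < 1).
  { unfold L. split. apply Rinv_0_lt_compat; lra.
    rewrite <- Rinv_1. apply Rinv_lt_contravar; lra. }
  specialize (hc z x L hL).
  assert (e : vadd (vscal L z) (vscal (1 - L) x) = y).
  { apply vec_ext; intro i. unfold z, L, vadd, vscal. field. lra. }
  rewrite e, hy, hx in hc.
  pose proof (hb z) as hz. destruct (f z) as [vz|]; [|contradiction].
  simpl in hc, hz.
  assert (e2 : 1 - L = t * L) by (unfold L; field; lra).
  rewrite e2 in hc.
  assert (vy * (1 + t) <= t * vx).
  { apply Rmult_le_reg_r with L; [lra|].
    replace (vy * (1 + t) * L) with vy by (unfold L; field; lra). nra. }
  assert (t * d = 1 - vy) by (unfold t; field; lra).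
  unfold d in *. nra.
Qed.

Lemma convex_bdd_const {n} (f : vec n -> ext) : convex f ->
  (forall z, ele (f z) (Some 0)) -> forall x y, f x = f y.
Proof.
  intros hc hb x y.
  pose proof (hb x) as hx. pose proof (hb y) as hy.
  destruct (f x) as [vx|] eqn:ex; [|contradiction].
  destruct (f y) as [vy|] eqn:ey; [|contradiction].
  f_equal. apply Rle_antisym; eapply bdd_le; eauto.
Qed.

Lemma ext_char (u w : ext) (r : R) : 0 < r ->
  (forall e, ele w (Some e) <-> ele u (Some (r * e))) -> u = escal r w.
Proof.
  intros hr h. destruct w as [b|].
  - pose proof (proj1 (h b) (Rle_refl b)) as h1.
      destruct u as [c|]; [|contradiction]. simpl in *.
      pose proof (proj2 (h (c / r))) as h2. simpl in h2.
      replace (r * (c / r)) with c in h2 by (field; lra).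
      specialize (h2 (Rle_refl c)).
      f_equal. apply Rle_antisym; auto.
      apply Rmult_le_reg_r with (/ r). apply Rinv_0_lt_compat; lra.
      replace (r * b * / r) with b by (field; lra). exact h2.
  - simpl. destruct u as [c|]; auto. exfalso.
    pose proof (proj2 (h (c / r))) as h2. simpl in h2.
    apply h2. replace (r * (c / r)) with c by (field; lra). lra.
Qed.

Record Hyp {n} (T : (vec n -> ext) -> (vec n -> ext)) : Prop := {
  hT : forall phi, Cvx phi -> Cvx (T phi);
  h1 : forall phi psi, Cvx phi -> Cvx psi -> (fle phi psi <-> fle (T phi) (T psi));
  h2 : forall phi, Cvx phi -> pos_hom phi -> forall x, T phi x = phi x;
  h3 : forall phi psi, Cvx phi -> Cvx psi ->
          (exists x, eadd (T phi x) (T psi x) <> None) ->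
          exists chi, Cvx chi /\ forall x, T chi x = eadd (T phi x) (T psi x) }.

Lemma H_at {n} (q : vec n) k lam x t : q k <> 0 -> inR q k x -> x k / q k = t ->
  H q k lam x = Some (lam * t).
Proof. intros hq hx ht. unfold H. destruct (dec _); [subst; auto|contradiction]. Qed.

Lemma inR_q {n} (q : vec n) k : q k <> 0 -> inR q k q.
Proof.
  intro hq. split.
  + unfold Rdiv; rewrite Rinv_r by auto; lra.
  + intro i. unfold Rdiv; rewrite Rinv_r by auto; ring.
Qed.

Lemma qk1 {n} (q : vec n) k : q k <> 0 -> q k / q k = 1.
Proof. intro hq. field. auto. Qed.

Lemma fle_D {n} (phi : vec n -> ext) q e : fle phi (D q e) <-> ele (phi q) (Some e).
Proof.
  split.
  - intro h. specialize (h q). unfold D in h. destruct (dec (q = q)); [auto|congruence].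
  - intros h x. unfold D. destruct (dec (x = q)); [subst; auto|apply ele_None].
Qed.

Lemma ele_None_l b : ele None b -> b = None.
Proof. destruct b; simpl; tauto. Qed.

Lemma D_off {n} (q : vec n) e x : x <> q -> D q e x = None.
Proof. intro h. unfold D. destruct (dec (x = q)); congruence. Qed.

Lemma D_on {n} (q : vec n) e : D q e q = Some e.
Proof. unfold D. destruct (dec (q = q)); congruence. Qed.


Lemma fle_ext {n} (f f' g g' : vec n -> ext) :
  (forall x, f x = f' x) -> (forall x, g x = g' x) -> fle f g -> fle f' g'.
Proof. intros e1 e2 h x. rewrite <- e1, <- e2. apply h. Qed.

Lemma TH {n} T (Hy : @Hyp n T) q k lam x : q k <> 0 -> T (H q k lam) x = H q k lam x.
Proof. intro hq. apply (h2 _ Hy); [apply Cvx_H|apply pos_hom_H]; auto. Qed.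

Lemma TZ {n} T (Hy : @Hyp n T) x : T (kc 0) x = Some 0.
Proof. rewrite (h2 _ Hy); [reflexivity|apply Cvx_kc|apply pos_hom_kc0]. Qed.

Lemma Td0 {n} T (Hy : @Hyp n T) x : T (D zv 0) x = D zv 0 x.
Proof. apply (h2 _ Hy); [apply Cvx_D|apply pos_hom_D0]. Qed.

Lemma H_le_D {n} (q : vec n) k lam e : q k <> 0 -> (fle (H q k lam) (D q e) <-> lam <= e).
Proof.
  intro hq. rewrite fle_D. rewrite (H_at q k lam q 1 hq (inR_q q k hq) (qk1 q k hq)).
  simpl. rewrite Rmult_1_r. tauto.
Qed.

Lemma TD_ge_H {n} T (Hy : @Hyp n T) (q : vec n) k e x v : q k <> 0 ->
  T (D q e) x = Some v -> inR q k x /\ e * (x k / q k) <= v.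
Proof.
  intros hq hx.
  assert (h : fle (H q k e) (D q e)) by (apply H_le_D; auto; lra).
  apply (h1 _ Hy) in h; [|apply Cvx_H; auto|apply Cvx_D].
  specialize (h x). rewrite TH in h by auto. rewrite hx in h.
  unfold H in h. destruct (dec (inR q k x)); [|contradiction]. simpl in h. auto.
Qed.

Lemma Cvx_ex {n} (f : vec n -> ext) : Cvx f -> exists x v, f x = Some v.
Proof. intros [_ [_ [x hx]]]. destruct (f x) eqn:E; [eauto|congruence]. Qed.

Lemma Cvx_D_on {n} (f : vec n -> ext) q : Cvx f -> (forall x, x <> q -> f x = None) ->
  exists v, f q = Some v.
Proof.
  intros hf h. destruct (Cvx_ex f hf) as [x [v hv]].
  destruct (dec (x = q)) as [e|e]; [subst; eauto|]. rewrite h in hv; congruence.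
Qed.

Lemma chain {n} T (Hy : @Hyp n T) (q : vec n) e chi :
  Cvx chi -> fle (T (D q e)) (T chi) -> forall x, x <> q -> chi x = None.
Proof.
  intros hc h x hx. apply (h1 _ Hy) in h; [|apply Cvx_D|auto].
  specialize (h x). rewrite D_off in h by auto. apply ele_None_l; auto.
Qed.

Lemma compar {n} (q : vec n) c1 c2 : Cvx c1 -> Cvx c2 ->
  (forall x, x <> q -> c1 x = None) -> (forall x, x <> q -> c2 x = None) ->
  fle c1 c2 \/ fle c2 c1.
Proof.
  intros hc1 hc2 e1 e2.
  destruct (Cvx_D_on c1 q hc1 e1) as [v1 hv1].
  destruct (Cvx_D_on c2 q hc2 e2) as [v2 hv2].
  destruct (Rle_or_lt v1 v2) as [h|h]; [left|right]; intro x;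
    destruct (dec (x = q)) as [E|E].
  - subst. rewrite hv1, hv2. simpl. lra.
  - rewrite e1, e2 by auto. simpl; auto.
  - subst. rewrite hv1, hv2. simpl. lra.
  - rewrite e1, e2 by auto. simpl; auto.
Qed.

Lemma TD_zero {n} T (Hy : @Hyp n T) (q : vec n) k e : q k <> 0 -> T (D q e) zv = None.
Proof.
  intro hq. destruct (T (D q e) zv) as [v|] eqn:E; auto. exfalso.
  destruct (TD_ge_H T Hy q k e zv v hq E) as [_ hv].
  replace (zv k / q k) with 0 in hv by (unfold zv; field; auto).
  destruct (h3 _ Hy (D q e) (D zv 0) (Cvx_D _ _) (Cvx_D _ _)) as [chi [hc hchi]].
  { exists zv. rewrite E, (Td0 T Hy), D_on. discriminate. }
  assert (a : fle (T (D q e)) (T chi)).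
  { intro x. rewrite hchi, (Td0 T Hy). destruct (dec (x = zv)) as [ex|ex].
    - subst. rewrite E, D_on. simpl. lra.
    - rewrite D_off by auto. destruct (T (D q e) x); simpl; auto. }
  assert (b : fle (D zv 0) chi).
  { apply (h1 _ Hy); [apply Cvx_D|auto|]. intro x. rewrite hchi, (Td0 T Hy).
    destruct (dec (x = zv)) as [ex|ex].
    - subst. rewrite E, D_on. simpl. lra.
    - rewrite D_off by auto. destruct (T (D q e) x); simpl; auto. }
  pose proof (chain T Hy q e chi hc a) as c1.
  destruct (Cvx_ex chi hc) as [x [w hw]].
  destruct (dec (x = q)) as [ex|ex].
  - subst. specialize (b q). rewrite D_off in b.
    + rewrite hw in b. exact b.
    + intro h. apply hq. rewrite h. reflexivity.
  - rewrite c1 in hw by auto. discriminate.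
Qed.

Lemma mono {n} T (Hy : @Hyp n T) phi psi : Cvx phi -> Cvx psi -> fle phi psi -> fle (T phi) (T psi).
Proof. intros a b. apply (h1 _ Hy); auto. Qed.
Lemma refl {n} T (Hy : @Hyp n T) phi psi : Cvx phi -> Cvx psi -> fle (T phi) (T psi) -> fle phi psi.
Proof. intros a b. apply (h1 _ Hy); auto. Qed.

Lemma Tkm1 {n} T (Hy : @Hyp n T) : exists a, a < 0 /\ forall x, T (kc (-1)) x = Some a.
Proof.
  assert (hb : fle (T (kc (-1))) (T (kc 0))).
  { apply (mono T Hy); try apply Cvx_kc. intro x. unfold kc; simpl; lra. }
  assert (hb' : forall z, ele (T (kc (-1)) z) (Some 0)).
  { intro z. specialize (hb z). rewrite (TZ T Hy) in hb. exact hb. }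
  assert (hc : convex (T (kc (-1)))) by (apply (hT _ Hy), Cvx_kc).
  pose proof (hb' zv) as h0. destruct (T (kc (-1)) zv) as [a|] eqn:E; [|contradiction].
  simpl in h0. exists a. split.
  - destruct (Rle_lt_or_eq _ _ h0) as [h|h]; auto. exfalso. subst a.
    assert (h : fle (T (kc 0)) (T (kc (-1)))).
    { intro x. rewrite (TZ T Hy). rewrite (convex_bdd_const _ hc hb' x zv), E. simpl; lra. }
    apply (refl T Hy) in h; try apply Cvx_kc. specialize (h zv). unfold kc in h; simpl in h. lra.
  - intro x. rewrite (convex_bdd_const _ hc hb' x zv). exact E.
Qed.

Lemma inR_pos {n} (q : vec n) k x : q k <> 0 -> inR q k x -> x <> zv -> 0 < x k / q k.
Proof.
  intros hq [h0 h1] hx. destruct (Rle_lt_or_eq _ _ h0) as [h|h]; auto. exfalso.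
  apply hx. apply vec_ext. intro i. rewrite (h1 i), <- h. unfold zv. ring.
Qed.

Lemma inR_vec {n} (q : vec n) k x : inR q k x -> x = vscal (x k / q k) q.
Proof. intros [_ h]. apply vec_ext. intro i. unfold vscal. apply h. Qed.

Lemma F0_zero {n} T (Hy : @Hyp n T) (q : vec n) k x v : q k <> 0 ->
  T (D q 0) x = Some v -> v = 0.
Proof.
  intros hq hx.
  destruct (TD_ge_H T Hy q k 0 x v hq hx) as [hR hv]. rewrite Rmult_0_l in hv.
  destruct (Rle_lt_or_eq _ _ hv) as [hp|]; auto. exfalso.
  assert (hx0 : x <> zv) by (intro e; subst; rewrite (TD_zero T Hy q k) in hx; auto; discriminate).
  set (t := x k / q k) in *. assert (ht : 0 < t) by (apply (inR_pos q k x hq hR hx0)).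
  set (lam := v / (2 * t)).
  destruct (h3 _ Hy (D q 0) (D q 0) (Cvx_D _ _) (Cvx_D _ _)) as [c1 [hc1 e1]].
  { exists x. rewrite hx. discriminate. }
  destruct (h3 _ Hy (D q 0) (H q k lam) (Cvx_D _ _) (Cvx_H _ _ _ hq)) as [c2 [hc2 e2]].
  { exists x. rewrite hx, (TH T Hy) by auto. rewrite (H_at q k lam x t hq hR eq_refl). discriminate. }
  assert (a1 : fle (T (D q 0)) (T c1)).
  { intro y. rewrite e1. destruct (T (D q 0) y) as [w|] eqn:E; simpl; auto.
    destruct (TD_ge_H T Hy q k 0 y w hq E) as [_ hw]. lra. }
  assert (a2 : fle (T (D q 0)) (T c2)).
  { intro y. rewrite e2. destruct (T (D q 0) y) as [w|] eqn:E; simpl; auto.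
    destruct (TD_ge_H T Hy q k 0 y w hq E) as [hRy hw].
    rewrite (TH T Hy) by auto. rewrite (H_at q k lam y _ hq hRy eq_refl). simpl.
    pose proof (proj1 hRy). unfold lam. assert (0 <= v / (2 * t)) by (unfold Rdiv; apply Rmult_le_pos; [lra|left; apply Rinv_0_lt_compat; lra]).
    nra. }
  destruct (compar q c1 c2 hc1 hc2 (chain T Hy q 0 c1 hc1 a1) (chain T Hy q 0 c2 hc2 a2)) as [c|c];
    apply (mono T Hy) in c; auto.
  - specialize (c x). rewrite e1, e2, hx, (TH T Hy) in c by auto.
    rewrite (H_at q k lam x t hq hR eq_refl) in c. simpl in c. unfold lam in c.
    replace (v / (2 * t) * t) with (v / 2) in c by (field; lra). lra.
  - assert (h : fle (H q k lam) (T (D q 0))).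
    { intro y. destruct (T (D q 0) y) as [w|] eqn:E; [|apply ele_None].
      destruct (TD_ge_H T Hy q k 0 y w hq E) as [hRy _].
      specialize (c y). rewrite e1, e2, E, (TH T Hy) in c by auto.
      rewrite (H_at q k lam y _ hq hRy eq_refl) in c |- *. simpl in c |- *. lra. }
    apply (fle_ext _ _ _ _ (fun y => eq_sym (TH T Hy q k lam y hq)) (fun y => eq_refl)) in h.
    apply (refl T Hy) in h; [|apply Cvx_H; auto|apply Cvx_D].
    apply H_le_D in h; auto. unfold lam in h.
    assert (0 < v / (2 * t)) by (apply Rdiv_lt_0_compat; lra). lra.
Qed.

Lemma F0_alpha {n} T (Hy : @Hyp n T) (q : vec n) k : q k <> 0 ->
  exists al, 0 < al /\ forall x v, T (D q 0) x = Some v -> al <= x k / q k.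
Proof.
  intro hq.
  destruct (hT _ Hy (D q 0) (Cvx_D _ _)) as [_ [hl _]].
  destruct (hl zv (1/2)) as [d [hd hd2]].
  { rewrite (TD_zero T Hy q k) by auto. simpl; auto. }
  destruct (vec_bound n q) as [M [hM hM2]].
  exists (d / M). split; [apply Rdiv_lt_0_compat; auto|].
  intros x v hx.
  pose proof (F0_zero T Hy q k x v hq hx) as hv0. subst v.
  destruct (TD_ge_H T Hy q k 0 x 0 hq hx) as [hR _].
  assert (hx0 : x <> zv) by (intro e; subst; rewrite (TD_zero T Hy q k) in hx; auto; discriminate).
  pose proof (inR_pos q k x hq hR hx0) as ht.
  destruct (Rle_or_lt (d / M) (x k / q k)) as [h|h]; auto. exfalso.
  assert (hy : forall i, Rabs (x i - zv i) < d).
  { intro i. destruct hR as [_ hR]. rewrite (hR i). unfold zv. rewrite Rminus_0_r.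
    rewrite Rabs_mult. rewrite (Rabs_right (x k / q k)) by lra.
    specialize (hM2 i). pose proof (Rabs_pos (q i)).
    apply Rle_lt_trans with (x k / q k * M). apply Rmult_le_compat_l; lra.
    apply Rmult_lt_reg_r with (/ M). apply Rinv_0_lt_compat; lra.
    rewrite Rmult_assoc, Rinv_r by lra. rewrite Rmult_1_r. exact h. }
  specialize (hd2 x hy). rewrite hx in hd2. simpl in hd2. lra.
Qed.

Lemma two_pt {n} T (Hy : @Hyp n T) (q : vec n) k x1 x2 al : q k <> 0 -> 0 < al ->
  (forall x v, T (D q 0) x = Some v -> al <= x k / q k) ->
  T (D q 0) x1 = Some 0 -> T (D q 0) x2 = Some 0 ->
  x1 k / q k < x2 k / q k -> False.
Proof.
  intros hq hal hA e1 e2 hlt.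
  destruct (TD_ge_H T Hy q k 0 x1 0 hq e1) as [hR1 _].
  destruct (TD_ge_H T Hy q k 0 x2 0 hq e2) as [hR2 _].
  set (t1 := x1 k / q k) in *. set (t2 := x2 k / q k) in *.
  pose proof (hA x1 0 e1) as ht1. pose proof (hA x2 0 e2) as ht2. fold t1 in ht1. fold t2 in ht2.
  destruct (Tkm1 T Hy) as [a [ha hTa]].
  set (mu := - a * (/ t1 + / t2) / 2).
  assert (hmu : 0 < mu).
  { unfold mu. assert (0 < / t1) by (apply Rinv_0_lt_compat; lra).
    assert (0 < / t2) by (apply Rinv_0_lt_compat; lra). nra. }
  assert (f1 : a + mu * t1 < 0).
  { replace (a + mu * t1) with (a * (t2 - t1) / (2 * t2)) by (unfold mu; field; lra).
    unfold Rdiv. assert (0 < / (2 * t2)) by (apply Rinv_0_lt_compat; lra).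
    assert (0 < (t2 - t1) * / (2 * t2)) by (apply Rmult_lt_0_compat; lra).
    rewrite Rmult_assoc. nra. }
  assert (f2 : 0 < a + mu * t2).
  { replace (a + mu * t2) with (- a * (t2 - t1) / (2 * t1)) by (unfold mu; field; lra).
    unfold Rdiv. assert (0 < / (2 * t1)) by (apply Rinv_0_lt_compat; lra).
    assert (0 < (t2 - t1) * / (2 * t1)) by (apply Rmult_lt_0_compat; lra).
    rewrite Rmult_assoc. nra. }
  set (lam' := - a / al).
  assert (hial : 0 < / al) by (apply Rinv_0_lt_compat; lra).
  assert (hl' : 0 <= lam') by (unfold lam', Rdiv; nra).
  set (lam := lam' + mu).
  destruct (h3 _ Hy (kc (-1)) (H q k lam) (Cvx_kc _) (Cvx_H _ _ _ hq)) as [ca [hca ea]].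
  { exists q. rewrite hTa, (TH T Hy) by auto. rewrite (H_at q k lam q 1 hq (inR_q q k hq) (qk1 q k hq)).
    discriminate. }
  destruct (h3 _ Hy (D q 0) ca (Cvx_D _ _) hca) as [cX [hcX eX]].
  { exists x1. rewrite e1, ea, hTa, (TH T Hy) by auto. rewrite (H_at q k lam x1 t1 hq hR1 eq_refl).
    discriminate. }
  destruct (h3 _ Hy (D q 0) (H q k lam') (Cvx_D _ _) (Cvx_H _ _ _ hq)) as [cY [hcY eY]].
  { exists x1. rewrite e1, (TH T Hy) by auto. rewrite (H_at q k lam' x1 t1 hq hR1 eq_refl).
    discriminate. }
  assert (aX : fle (T (D q 0)) (T cX)).
  { intro y. rewrite eX. destruct (T (D q 0) y) as [w|] eqn:E; simpl; auto.
    destruct (TD_ge_H T Hy q k 0 y w hq E) as [hRy _].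
    pose proof (hA y w E) as hty.
    rewrite ea, hTa, (TH T Hy) by auto. rewrite (H_at q k lam y _ hq hRy eq_refl). simpl.
    assert (lam * (y k / q k) >= lam * al) by (apply Rle_ge, Rmult_le_compat_l; unfold lam; lra).
    assert (lam * al = - a + mu * al) by (unfold lam, lam'; field; lra).
    nra. }
  assert (aY : fle (T (D q 0)) (T cY)).
  { intro y. rewrite eY. destruct (T (D q 0) y) as [w|] eqn:E; simpl; auto.
    destruct (TD_ge_H T Hy q k 0 y w hq E) as [hRy _].
    rewrite (TH T Hy) by auto. rewrite (H_at q k lam' y _ hq hRy eq_refl). simpl.
    pose proof (proj1 hRy). nra. }
  destruct (compar q cX cY hcX hcY (chain T Hy q 0 cX hcX aX) (chain T Hy q 0 cY hcY aY)) as [c|c];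
    apply (mono T Hy) in c; auto.
  - specialize (c x2). rewrite eX, eY, e2, ea, hTa, (TH T Hy), (TH T Hy) in c by auto.
    rewrite (H_at q k lam x2 t2 hq hR2 eq_refl), (H_at q k lam' x2 t2 hq hR2 eq_refl) in c.
    simpl in c. unfold lam in c. nra.
  - specialize (c x1). rewrite eX, eY, e1, ea, hTa, (TH T Hy), (TH T Hy) in c by auto.
    rewrite (H_at q k lam x1 t1 hq hR1 eq_refl), (H_at q k lam' x1 t1 hq hR1 eq_refl) in c.
    simpl in c. unfold lam in c. nra.
Qed.

Lemma F0_unique {n} T (Hy : @Hyp n T) (q : vec n) k x1 x2 v1 v2 : q k <> 0 ->
  T (D q 0) x1 = Some v1 -> T (D q 0) x2 = Some v2 -> x1 = x2.
Proof.
  intros hq e1 e2.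
  pose proof (F0_zero T Hy q k x1 v1 hq e1). pose proof (F0_zero T Hy q k x2 v2 hq e2). subst.
  destruct (F0_alpha T Hy q k hq) as [al [hal hA]].
  destruct (TD_ge_H T Hy q k 0 x1 0 hq e1) as [hR1 _].
  destruct (TD_ge_H T Hy q k 0 x2 0 hq e2) as [hR2 _].
  destruct (Rtotal_order (x1 k / q k) (x2 k / q k)) as [h|[h|h]].
  - exfalso; exact (two_pt T Hy q k x1 x2 al hq hal hA e1 e2 h).
  - rewrite (inR_vec q k x1 hR1), (inR_vec q k x2 hR2), h. reflexivity.
  - exfalso; exact (two_pt T Hy q k x2 x1 al hq hal hA e2 e1 h).
Qed.

Lemma TD_form {n} T (Hy : @Hyp n T) (q : vec n) k : q k <> 0 ->
  exists r, 0 < r /\ forall e x, T (D q e) x = D (vscal r q) (r * e) x.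
Proof.
  intro hq.
  destruct (Cvx_ex _ (hT _ Hy (D q 0) (Cvx_D _ _))) as [j [v0 hj]].
  destruct (TD_ge_H T Hy q k 0 j v0 hq hj) as [hRj _].
  assert (hj0 : j <> zv) by (intro e; subst; rewrite (TD_zero T Hy q k) in hj; auto; discriminate).
  set (r := j k / q k).
  assert (hr : 0 < r) by (apply (inR_pos q k j hq hRj hj0)).
  assert (hjr : j = vscal r q) by (apply inR_vec; auto).
  exists r. split; auto.
  assert (off0 : forall x w, T (D q 0) x = Some w -> x = j).
  { intros x w hx. exact (F0_unique T Hy q k x j w v0 hq hx hj). }
  assert (off : forall e x, x <> j -> T (D q e) x = None).
  { intros e x hx.
    destruct (Rle_or_lt 0 e) as [he|he].
    - assert (h : fle (T (D q 0)) (T (D q e))).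
      { apply (mono T Hy); try apply Cvx_D. intro y. unfold D.
        destruct (dec (y = q)); simpl; lra. }
      specialize (h x). destruct (T (D q e) x) as [w|] eqn:E; auto.
      destruct (T (D q 0) x) as [w0|] eqn:E0; [|contradiction].
      exfalso. apply hx. eapply off0; eauto.
    - destruct (Cvx_ex _ (hT _ Hy (D q e) (Cvx_D _ _))) as [y [w hy]].
      destruct (TD_ge_H T Hy q k e y w hq hy) as [hRy _].
      destruct (h3 _ Hy (D q e) (H q k (-e)) (Cvx_D _ _) (Cvx_H _ _ _ hq)) as [c [hc ec]].
      { exists y. rewrite hy, (TH T Hy) by auto. rewrite (H_at q k (-e) y _ hq hRy eq_refl). discriminate. }
      assert (a1 : fle (T (D q e)) (T c)).
      { intro z. rewrite ec. destruct (T (D q e) z) as [u|] eqn:E; simpl; auto.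
        destruct (TD_ge_H T Hy q k e z u hq E) as [hRz _].
        rewrite (TH T Hy) by auto. rewrite (H_at q k (-e) z _ hq hRz eq_refl). simpl.
        pose proof (proj1 hRz). nra. }
      pose proof (chain T Hy q e c hc a1) as hch.
      assert (a2 : fle (T (kc 0)) (T c)).
      { intro z. rewrite ec, (TZ T Hy). destruct (T (D q e) z) as [u|] eqn:E; simpl; auto.
        destruct (TD_ge_H T Hy q k e z u hq E) as [hRz hu].
        rewrite (TH T Hy) by auto. rewrite (H_at q k (-e) z _ hq hRz eq_refl). simpl. nra. }
      apply (refl T Hy) in a2; [|apply Cvx_kc|auto].
      destruct (Cvx_D_on c q hc hch) as [e' he'].
      assert (a3 : fle (D q 0) c).
      { intro z. destruct (dec (z = q)) as [ez|ez].
        - rewrite ez. rewrite D_on, he'. specialize (a2 q). rewrite he' in a2. exact a2.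
        - rewrite D_off, hch by auto. simpl; auto. }
      apply (mono T Hy) in a3; [|apply Cvx_D|auto].
      specialize (a3 x). rewrite ec in a3.
      destruct (T (D q e) x) as [u|] eqn:E; auto. exfalso.
      destruct (TD_ge_H T Hy q k e x u hq E) as [hRx _].
      rewrite (TH T Hy), (H_at q k (-e) x _ hq hRx eq_refl) in a3 by auto. simpl in a3.
      destruct (T (D q 0) x) as [w0|] eqn:E0; [|contradiction].
      apply hx. eapply off0; eauto. }
  assert (val : forall e, T (D q e) j = Some (r * e)).
  { intro e. destruct (Cvx_D_on _ j (hT _ Hy (D q e) (Cvx_D _ _)) (off e)) as [v hv].
    destruct (TD_ge_H T Hy q k e j v hq hv) as [_ hv1]. fold r in hv1.
    assert (h : fle (H q k (v / r)) (T (D q e))).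
    { intro y. destruct (dec (y = j)) as [ey|ey].
      - rewrite ey. rewrite hv, (H_at q k (v / r) j r hq hRj eq_refl). simpl.
        right. field. lra.
      - rewrite (off e y ey). apply ele_None. }
    apply (fle_ext _ _ _ _ (fun y => eq_sym (TH T Hy q k _ y hq)) (fun y => eq_refl)) in h.
    apply (refl T Hy) in h; [|apply Cvx_H; auto|apply Cvx_D].
    apply H_le_D in h; auto.
    rewrite hv. f_equal. apply Rle_antisym.
    - apply Rmult_le_reg_r with (/ r). apply Rinv_0_lt_compat; lra.
      replace (v * / r) with (v / r) by reflexivity. rewrite Rmult_comm, <- Rmult_assoc, Rinv_l by lra. lra.
    - lra. }
  intros e x. rewrite <- hjr. destruct (dec (x = j)) as [ex|ex].
  - rewrite ex. rewrite val, D_on. reflexivity.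
  - rewrite off, D_off by auto. reflexivity.
Qed.

Lemma r_eq {n} T (Hy : @Hyp n T) (q : vec n) a r : 0 < r ->
  (forall x, T (kc (-1)) x = Some a) ->
  (forall e x, T (D q e) x = D (vscal r q) (r * e) x) -> r = - a.
Proof.
  intros hr ha hD.
  assert (h1' : fle (kc (-1)) (D q (-1))) by (apply fle_D; unfold kc; simpl; lra).
  apply (mono T Hy) in h1'; [|apply Cvx_kc|apply Cvx_D].
  specialize (h1' (vscal r q)). rewrite ha, hD, D_on in h1'. simpl in h1'.
  assert (h2' : fle (T (kc (-1))) (T (D q (a / r)))).
  { intro x. rewrite ha, hD. destruct (dec (x = vscal r q)) as [E|E].
    - rewrite E. rewrite D_on. simpl. right. field. lra.
    - rewrite D_off by auto. simpl; auto. }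
  apply (refl T Hy) in h2'; [|apply Cvx_kc|apply Cvx_D].
  apply fle_D in h2'. unfold kc in h2'. simpl in h2'.
  assert (- r <= a).
  { apply Rmult_le_reg_r with (/ r). apply Rinv_0_lt_compat; lra.
    replace (- r * / r) with (-1) by (field; lra). exact h2'. }
  lra.
Qed.

Lemma valf {n} T (Hy : @Hyp n T) (q : vec n) rho phi : 0 < rho -> Cvx phi ->
  (forall e x, T (D q e) x = D (vscal rho q) (rho * e) x) ->
  T phi (vscal rho q) = escal rho (phi q).
Proof.
  intros hr hp hD. apply ext_char; auto. intro e.
  rewrite <- fle_D. rewrite <- fle_D.
  split.
  - intro h. apply (mono T Hy) in h; [|auto|apply Cvx_D].
    exact (fle_ext _ _ _ _ (fun x => eq_refl) (hD e) h).
  - intro h. apply (refl T Hy); [auto|apply Cvx_D|].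
    exact (fle_ext _ _ _ _ (fun x => eq_refl) (fun x => eq_sym (hD e x)) h).
Qed.

Lemma vscal_inv {n} (x : vec n) r : 0 < r -> vscal r (vscal (/ r) x) = x.
Proof. intro h. apply vec_ext; intro i. unfold vscal. field. lra. Qed.

Lemma nz_coord {n} (x : vec n) r : 0 < r -> x <> zv -> exists k, vscal (/ r) x k <> 0.
Proof.
  intros hr hx. destruct (vec_neq _ _ hx) as [i hi]. exists i. unfold vscal, zv in *.
  intro h. apply Rmult_integral in h. destruct h as [h|h]; [|contradiction].
  pose proof (Rinv_0_lt_compat r hr). lra.
Qed.

Theorem main {n} (Hn : (1 <= n)%nat) T (Hy : @Hyp n T) :
  exists C, 0 < C /\ forall phi, Cvx phi -> forall x : vec n,
      T phi x = escal (/ C) (phi (vscal C x)).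
Proof.
  destruct (Tkm1 T Hy) as [a [ha hTa]].
  set (rho := - a). assert (hr : 0 < rho) by (unfold rho; lra).
  assert (TDnz : forall q, (exists k, q k <> 0) -> forall e x, T (D q e) x = D (vscal rho q) (rho * e) x).
  { intros q [k hk]. destruct (TD_form T Hy q k hk) as [r [hr' hD]].
    assert (er : r = rho) by (exact (r_eq T Hy q a r hr' hTa hD)).
    rewrite er in hD. exact hD. }
  assert (valnz : forall phi x, Cvx phi -> x <> zv -> T phi x = escal rho (phi (vscal (/ rho) x))).
  { intros phi x hp hx. rewrite <- (vscal_inv x rho hr) at 1.
    apply (valf T Hy); auto. apply TDnz. apply nz_coord; auto. }
  assert (Dz_off : forall e x, x <> zv -> T (D zv e) x = None).
  { intros e x hx. rewrite valnz by (auto; apply Cvx_D). rewrite D_off; auto.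
    intro h. apply hx. rewrite <- (vscal_inv x rho hr), h. apply vec_ext; intro i; unfold vscal, zv; ring. }
  destruct n as [|m]; [lia|].
  set (w := (fun _ => 1) : vec (S m)).
  assert (nz : forall s, s <> 0 -> vscal s w <> zv).
  { intros s hs h. assert (h' := f_equal (fun f => f Fin.F1) h). unfold vscal, w, zv in h'. simpl in h'. lra. }
  assert (Tk : forall c, T (kc c) zv = Some (rho * c)).
  { intro c. pose proof (hT _ Hy (kc c) (Cvx_kc c)) as [hc _].
    assert (kv : forall s, s <> 0 -> T (kc c) (vscal s w) = Some (rho * c)).
    { intros s hs. rewrite valnz; auto. apply Cvx_kc. }
    pose proof (hc w (vscal (-1) w) (1/2) ltac:(lra)) as c1.
    assert (e1 : vadd (vscal (1/2) w) (vscal (1 - 1/2) (vscal (-1) w)) = zv)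
      by (apply vec_ext; intro i; unfold vadd, vscal, zv; field).
    rewrite e1, kv in c1 by lra.
    replace w with (vscal 1 w) in c1 at 1 by (apply vec_ext; intro i; unfold vscal; ring).
    rewrite kv in c1 by lra. simpl in c1.
    destruct (T (kc c) zv) as [u|] eqn:E; [|contradiction]. simpl in c1.
    pose proof (hc zv (vscal 2 w) (1/2) ltac:(lra)) as c2.
    assert (e2 : vadd (vscal (1/2) zv) (vscal (1 - 1/2) (vscal 2 w)) = vscal 1 w)
      by (apply vec_ext; intro i; unfold vadd, vscal, zv; field).
    rewrite e2, E, kv, kv in c2 by lra. simpl in c2.
    f_equal. lra. }
  assert (Dz : forall e, T (D zv e) zv = Some (rho * e)).
  { intro e.
    assert (hc : forall c, c <= e <-> ele (Some (rho * c)) (T (D zv e) zv)).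
    { intro c. split.
      - intro h. assert (h' : fle (@kc (S m) c) (D zv e)) by (apply fle_D; unfold kc; simpl; auto).
        apply (mono T Hy) in h'; [|apply Cvx_kc|apply Cvx_D]. specialize (h' zv). rewrite Tk in h'. exact h'.
      - intro h. assert (h' : fle (T (kc c)) (T (D zv e))).
        { intro x. destruct (dec (x = zv)) as [E|E].
          - rewrite E, Tk. exact h.
          - rewrite Dz_off by auto. apply ele_None. }
        apply (refl T Hy) in h'; [|apply Cvx_kc|apply Cvx_D]. apply fle_D in h'. exact h'. }
    destruct (T (D zv e) zv) as [b|] eqn:E.
    - f_equal. apply Rle_antisym.
      + assert (hb : b / rho <= e).
        { apply hc. simpl. right. field. lra. }
        apply Rmult_le_reg_r with (/ rho). apply Rinv_0_lt_compat; lra.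
        replace (b * / rho) with (b / rho) by reflexivity.
        replace (rho * e * / rho) with e by (field; lra). exact hb.
      + apply (hc e). lra.
    - exfalso. pose proof (proj2 (hc (e + 1)) I). lra. }
  assert (TDall : forall q e x, T (D q e) x = D (vscal rho q) (rho * e) x).
  { intros q e x. destruct (dec (q = zv)) as [E|E].
    - subst q. replace (vscal rho zv) with (@zv (S m)) by (apply vec_ext; intro i; unfold vscal, zv; ring).
      destruct (dec (x = zv)) as [E2|E2].
      + rewrite E2, Dz, D_on. reflexivity.
      + rewrite Dz_off, D_off by auto. reflexivity.
    - apply TDnz. destruct (vec_neq _ _ E) as [i hi]. exists i. exact hi. }
  exists (/ rho). split; [apply Rinv_0_lt_compat; lra|].
  intros phi hp x. rewrite Rinv_inv.
  rewrite <- (vscal_inv x rho hr) at 1. apply (valf T Hy); auto.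
Qed.

Theorem theorem1p4 (n : nat) (Hn : (1 <= n)%nat)
  (T : (vec n -> ext) -> (vec n -> ext))
  (HT : forall phi, Cvx phi -> Cvx (T phi))
  (H1 : forall phi psi, Cvx phi -> Cvx psi ->
          (fle phi psi <-> fle (T phi) (T psi)))
  (H2 : forall phi, Cvx phi -> pos_hom phi -> forall x, T phi x = phi x)
  (H3 : forall phi psi, Cvx phi -> Cvx psi ->
          (exists x, eadd (T phi x) (T psi x) <> None) ->
          exists chi, Cvx chi /\
            forall x, T chi x = eadd (T phi x) (T psi x)) :
  exists C, 0 < C /\
    forall phi, Cvx phi -> forall x : vec n,
      T phi x = escal (/ C) (phi (vscal C x)).
Proof.
  apply main; auto. constructor; auto.
Qed.
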